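(* In the setting described in the context, let $\gamma\in 2\Delta^+$. If $S_\gamma>0$, then either the number of ordered pairs $(\alpha,\beta)\in\Delta^+\times\Delta^+$ with $\alpha+\beta=\gamma$ is greater than two, or there exist $\alpha,\beta\in\Delta^+$ with $\alpha+\beta=\gamma$ and $\langle\alpha,\beta\rangle<0$.
   Context: Let $K$ be a compact Lie group with Lie algebra $\mathfrak k$, and $V$ a complex irreducible representation of $K$ (an irreducible orthogonal representation with an invariant complex structure) with $K$-invariant Hermitian product; $\mathfrak g=\mathfrak k^{\mathbb C}$ acts on $V$. Fix a maximal torus with complexified Lie algebra $\mathfrak h$, roots $\Delta$, positive roots $\Delta^+$; $\langle\cdot,\cdot\rangle$ also denotes the Cartan–Killing form on $\mathfrak h^*$. Choose $f_\alpha\in\mathfrak g_{-\alpha}$, $e_\alpha\in\mathfrak g_\alpha$ ($\alpha\in\Delta^+$) with $[e_\alpha,f_\alpha]=h_\alpha$, $\langle h_\alpha,h\rangle=2\alpha(h)/\|\alpha\|^2$ for $h\in\mathfrak h$, and $e_\alpha-f_\alpha$, $i(e_\alpha+f_\alpha)$, $ih_\alpha$ spanning the semisimple part of $\mathfrak k$. Let $p$ be a unit highest weight vector of $V$, and let $f=\sum_{\alpha\in\Delta^+}z_\alpha f_\alpha$ ($z_\alpha\in\mathbb C$) with $\|fp\|=1$. Put $r_\alpha=|z_\alpha|\,\|f_\alpha p\|$. For $\alpha,\beta\in\Delta^+$ let $m_{\alpha,\beta}=\sqrt2$ if $\alpha=\beta$ or $\langle\alpha,\beta\rangle<0$, and $m_{\alpha,\beta}=1$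 otherwise. Let $2\Delta^+=\{\alpha+\beta:\alpha,\beta\in\Delta^+\}$, and for $\gamma\in2\Delta^+$ set \[S_\gamma=\Big(\sum_{\alpha+\beta=\gamma}m_{\alpha,\beta}r_\alpha r_\beta\Big)^2-2\sum_{\alpha+\beta=\gamma}r_\alpha^2r_\beta^2,\] where both sums run over ordered pairs $(\alpha,\beta)\in\Delta^+\times\Delta^+$ with $\alpha+\beta=\gamma$. *)

(* Defs.v *)
From HB Require Import structures.
From mathcomp Require Import all_boot all_order all_algebra.
From mathcomp Require Import reals.
Set Implicit Arguments. Unset Strict Implicit. Unset Printing Implicit Defensive.
Import Order.TTheory GRing.Theory Num.Theory.
Local Open Scope ring_scope.

(* Positive roots are (distinct) vectors [pos] of a real vector space 'rV[R]_n
   (the real span of the roots inside h^* ), [kf] is the Cartan-Killing form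
   on h^*, and [r a] is the number r_alpha. *)

Definition root_pairs (R : realType) (n : nat) (pos : seq 'rV[R]_n)
    (g : 'rV[R]_n) : seq ('rV[R]_n * 'rV[R]_n) :=
  [seq ab <- [seq (a, b) | a <- pos, b <- pos] | ab.1 + ab.2 == g].

Definition in_two_pos (R : realType) (n : nat) (pos : seq 'rV[R]_n)
    (g : 'rV[R]_n) : Prop :=
  exists a b, [/\ a \in pos, b \in pos & a + b = g].

Definition mult_ab (R : realType) (n : nat) (kf : 'rV[R]_n -> 'rV[R]_n -> R)
    (a b : 'rV[R]_n) : R :=
  if (a == b) || (kf a b < 0) then Num.sqrt 2 else 1.

Definition S_gamma (R : realType) (n : nat) (pos : seq 'rV[R]_n)
    (kf : 'rV[R]_n -> 'rV[R]_n -> R) (r : 'rV[R]_n -> R) (g : 'rV[R]_n) : R :=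
  (\sum_(ab <- root_pairs pos g) mult_ab kf ab.1 ab.2 * r ab.1 * r ab.2) ^+ 2
  - 2 * \sum_(ab <- root_pairs pos g) r ab.1 ^+ 2 * r ab.2 ^+ 2.

(* Main.v *)
Require Import Defs.
From HB Require Import structures.
From mathcomp Require Import all_boot all_order all_algebra.
From mathcomp Require Import reals.
From mathcomp Require Import ring lra.
Import Order.TTheory GRing.Theory Num.Theory.
Local Open Scope ring_scope.

Lemma nodiag (T : eqType) (p q : T * T) :
  uniq [:: p; q] ->
  (forall x y, (x, y) \in [:: p; q] -> (y, x) \in [:: p; q]) ->
  (forall x y, (x, x) \in [:: p; q] -> (y, y) \in [:: p; q] -> x = y) ->
  p.1 != p.2.
Proof.
case: p q => a b [c d] /= U sw dg; apply/eqP => eab; subst b.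
have cin : (c, d) \in [:: (a, a); (c, d)] by rewrite !inE eqxx orbT.
have ain : (a, a) \in [:: (a, a); (c, d)] by rewrite inE eqxx.
have := sw _ _ cin; rewrite !inE => /orP[/eqP[e1 e2]|/eqP[e1 e2]].
  by subst; rewrite !inE eqxx in U.
subst d; have eac := dg a c ain cin; subst c.
by rewrite !inE eqxx in U.
Qed.

Theorem mainTheorem6 (R : realType) (n : nat) (pos : seq 'rV[R]_n)
    (kf : 'rV[R]_n -> 'rV[R]_n -> R) (r : 'rV[R]_n -> R) (g : 'rV[R]_n) :
  uniq pos ->
  (forall a, a \in pos -> 0 <= r a) ->
  in_two_pos pos g ->
  0 < S_gamma pos kf r g ->
  (2 < size (root_pairs pos g))%N \/
  (exists a b, [/\ a \in pos, b \in pos, a + b = g & kf a b < 0]).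
Proof.
move=> upos r0 _ HS; rewrite /S_gamma in HS.
have uL : uniq (root_pairs pos g).
  by rewrite filter_uniq // allpairs_uniq // => [][? ?][? ?] _ _ /= [-> ->].
have memL : forall x y, ((x, y) \in root_pairs pos g)
    = [&& x \in pos, y \in pos & x + y == g].
  move=> x y; rewrite mem_filter /=.
  case: (x + y == g); rewrite ?andbF ?andbT //=.
  apply/idP/idP.
    by case/allpairsP => [[u v] /= [uin vin [-> ->]]]; rewrite uin vin.
  by case/andP => xin yin; apply: (allpairs_f pair xin yin).
move: HS uL memL; set L := root_pairs pos g => HS uL memL.
case: (leqP (size L) 2) => hL; last by left.
right.
case: (boolP (has (fun ab => kf ab.1 ab.2 < 0) L)) => [/hasP [[a b] inL neg]|hn].
  move: inL; rewrite memL => /and3P[ain bin /eqP e].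
  by exists a, b.
exfalso.
have mE : forall ab, ab \in L ->
    mult_ab kf ab.1 ab.2 = if ab.1 == ab.2 then Num.sqrt 2 else 1.
  move=> ab abin; rewrite /mult_ab.
  have := hasPn hn ab abin => /negbTE ->; by rewrite orbF.
have sw : forall x y, (x, y) \in L -> (y, x) \in L.
  move=> x y; rewrite !memL => /and3P[-> -> /eqP <-]; by rewrite addrC eqxx.
have dg : forall x y, (x, x) \in L -> (y, y) \in L -> x = y.
  move=> x y; rewrite !memL => /and3P[_ _ /eqP e1] /and3P[_ _ /eqP e2].
  apply/matrixP => i j; have := congr1 (fun M : 'rV[R]_n => M i j) (etrans e1 (esym e2)).
  rewrite /= !mxE => h; lra.
clearbody L.
case: L HS uL memL hL hn mE sw dg => [|p [|q [|? ?]]] //= HS uL memL hL hn mE sw dg.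
- by rewrite !big_nil in HS; lra.
- rewrite !big_cons !big_nil in HS.
  have hm : mult_ab kf p.1 p.2 ^+ 2 <= 2.
    rewrite /mult_ab; case: ifP => _; last by rewrite expr1n; lra.
    by rewrite sqr_sqrtr // ler0n.
  set m := mult_ab kf p.1 p.2 in HS hm.
  have h1 : 0 <= 2 - m ^+ 2 by rewrite subr_ge0.
  have := mulr_ge0 h1 (sqr_ge0 (r p.1 * r p.2)).
  move=> h; nra.
- have np : p.1 != p.2 by exact: (@nodiag _ p q uL sw dg).
  have nq : q.1 != q.2.
    have eqm : forall z, (z \in [:: q; p]) = (z \in [:: p; q]).
      by move=> z; rewrite !inE orbC.
    apply: (@nodiag _ q p).
    + by move: uL; rewrite /= !inE !andbT eq_sym.
    + by move=> x y; rewrite !eqm; apply: sw.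
    + by move=> x y; rewrite !eqm; apply: dg.
  rewrite !big_cons !big_nil in HS.
  rewrite (mE p) ?inE ?eqxx // (negbTE np) in HS.
  rewrite (mE q) ?inE ?eqxx ?orbT // (negbTE nq) in HS.
  move: HS; set x := r p.1 * r p.2; set y := r q.1 * r q.2.
  rewrite !mul1r -!exprMn -/x -/y => HS.
  have := sqr_ge0 (x - y); nra.
Qed.
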